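(* Let $(\ell_n)_{n\in\mathbb N}$ and $(\sigma_{n,0})_{n\in\mathbb N}$ be sequences of strictly positive reals, $(\kappa_n)_{n\in\mathbb N}$ a sequence of reals, and $(\sigma_{n,1})_{n\in\mathbb N}$, $(\sigma_{n,-1})_{n\in\mathbb N}$ sequences of nonnegative reals. Put $\sigma_n=\max(\sigma_{n,-1},\sigma_{n,1})$. Assume $$\liminf_{n\to\infty}\frac{1}{n^2}\Big(\frac{\ell_n}{\sigma_{n,0}}+\frac{(\kappa_n^-)^2}{\sigma_{n,0}^2}\Big)=0 .$$ Assume $\mathbb N$ is a disjoint union $\mathbb N=\mathbb N_a\cup\mathbb N_b$ such that (a) $2\sigma_n\le\sigma_{n,0}$ for every $n\in\mathbb N_a$, and (b) $\sigma_n\le\sigma_{n,0}<2\sigma_n$ and $-2(\sigma_{n,0}-\sigma_n)\sqrt{\ell_n}\le \kappa_n\sqrt{2\sigma_n-\sigma_{n,0}}$ for every $n\in\mathbb N_b$. Let $x_0\in\mathbb R$; if $1\in\mathbb N_a$, $x_0$ is arbitrary, while if $1\in\mathbb N_b$ assume additionally $$-2(\sigma_{1,0}-\sigma_1)\sqrt{\ell_1}\le(\sigma_{1,-1}x_0+\kappa_1)\sqrt{2\sigma_1-\sigma_{1,0}} .$$ Then there is at most one positive sequence $(x_n)_{n\in\mathbb N}$ satisfying $$\ell_n = x_n\big(\sigma_{n,1}x_{n+1}+\sigma_{n,0}x_n+\sigma_{n,-1}x_{n-1}\big)+\kappa_n x_n,\qquad n\in\mathbb N,$$ with the given $x_0$;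 equivalently, there is a number $x^\ast>0$ such that every positive solution has $x_1=x^\ast$, and any two positive solutions coincide.
   Context: $\mathbb N=\{1,2,3,\dots\}$. For $a\in\mathbb R$, $a^-=(|a|-a)/2$ denotes the negative part. A solution with given $x_0\in\mathbb R$ is a real sequence $(x_n)_{n\in\mathbb N}$ satisfying the displayed equation for all $n\in\mathbb N$ (where the $n=1$ equation involves the given $x_0$); it is positive if $x_n>0$ for all $n\in\mathbb N$. *)

(* Defs.v *)
From Stdlib Require Import Reals Lra.
Open Scope R_scope.

Definition negpart (a : R) : R := (Rabs a - a) / 2.

Definition liminf_eq (u : nat -> R) (l : R) : Prop :=
  (forall eps, 0 < eps -> exists N, forall n, (N <= n)%nat -> l - eps < u n) /\
  (forall eps, 0 < eps -> forall N, exists n, (N <= n)%nat /\ u n < l + eps).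

(* x is a solution with given x0 (index 0 holds x0; N = {1,2,...}) *)
Definition is_solution (ell s1 s0 sm1 kappa : nat -> R) (x0 : R) (x : nat -> R) : Prop :=
  x 0%nat = x0 /\
  forall n, (1 <= n)%nat ->
    ell n = x n * (s1 n * x (S n) + s0 n * x n + sm1 n * x (n - 1)%nat) + kappa n * x n.

Definition is_positive (x : nat -> R) : Prop :=
  forall n, (1 <= n)%nat -> 0 < x n.

(* Main.v *)
Require Import Defs.
From Stdlib Require Import Reals Lra Lia Psatz Classical.
Open Scope R_scope.

Lemma pm1_sq k : (-1)^k * (-1)^k = 1.
Proof. induction k; simpl; [ring|]. replace (-1 * (-1) ^ k * (-1 * (-1) ^ k)) with ((-1)^k * (-1)^k) by ring. exact IHk. Qed.

Lemma growth (d A s1 sm1 : nat -> R) (k : nat) :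
 (1 <= k)%nat -> d (k-1)%nat = 0 -> d k <> 0 ->
 (forall n, (k <= n)%nat -> s1 n * d (S n) + A n * d n + sm1 n * d (n-1)%nat = 0) ->
 (forall n, (k<=n)%nat -> 0 <= s1 n /\ 0 <= sm1 n /\ 0 < A n /\ 2 * Rmax (sm1 n) (s1 n) <= A n) ->
 forall j, Rabs (d k) * INR (S j) <= Rabs (d (k + j)%nat).
Proof.
  intros Hk Hd0 Hdk Hrec Hco.
  set (c := (-1)^k * d k).
  set (E := fun i => (-1)^i * d i * c).
  assert (HEk : E k = d k * d k).
  { unfold E, c. transitivity (((-1)^k * (-1)^k) * (d k * d k)); [ring|]. rewrite pm1_sq; ring. }
  assert (HEk0 : 0 < E k) by (rewrite HEk; nra).
  assert (HER : forall n, (k <= n)%nat -> s1 n * E (S n) = A n * E n - sm1 n * E (n-1)%nat).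
  { intros n Hn. destruct n as [|p]; [lia|]. specialize (Hrec (S p) Hn).
    replace (S p - 1)%nat with p in * by lia.
    assert (s1 (S p) * E (S (S p)) - A (S p) * E (S p) + sm1 (S p) * E p =
      ((-1)^p * c) * (s1 (S p) * d (S (S p)) + A (S p) * d (S p) + sm1 (S p) * d p)).
    { unfold E; simpl; ring. }
    rewrite Hrec in H. lra. }
  assert (C : forall j, E k <= E (k+j)%nat - E (k+j-1)%nat /\ INR (S j) * E k <= E (k+j)%nat
                /\ 0 <= E (k+j-1)%nat).
  { induction j as [|j IH].
    - replace (k+0)%nat with k by lia. assert (E (k-1)%nat = 0) by (unfold E; rewrite Hd0; ring).
      rewrite H. simpl. lra.
    - destruct IH as [I1 [I2 I3]].
      replace (k + S j)%nat with (S (k+j)) by lia.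
      replace (S (k+j) - 1)%nat with (k+j)%nat by lia.
      set (n := (k+j)%nat) in *.
      assert (Hn : (k <= n)%nat) by (unfold n; lia).
      destruct (Hco n Hn) as [Hs1 [Hsm1 [HA HM]]].
      pose proof (HER n Hn) as R.
      replace (n-1)%nat with (k+j-1)%nat in * by (unfold n; lia).
      pose proof (Rmax_l (sm1 n) (s1 n)). pose proof (Rmax_r (sm1 n) (s1 n)).
      rewrite S_INR in *.
      assert (HINR : 0 <= INR j) by apply pos_INR.
      assert (HEn : 0 < E n) by nra.
      assert (Step : E k <= E (S n) - E n).
      { destruct (Req_dec (s1 n) 0) as [Z|Z].
        - exfalso. rewrite Z in R.
          assert (0 <= sm1 n * (E n - E (k+j-1)%nat)) by (apply Rmult_le_pos; lra).
          assert (0 <= (A n - 2 * sm1 n) * E n) by (apply Rmult_le_pos; lra).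
          assert (0 < A n * E n) by (apply Rmult_lt_0_compat; lra).
          lra.
        - assert (Hp : 0 < s1 n) by lra.
          assert (s1 n * (E (S n) - E n - E k) >= 0).
          { destruct (Rle_dec (s1 n) (sm1 n)); nra. }
          nra. }
      split; [lra|]. split; [|lra]. rewrite S_INR in *. nra. }
  intro j. destruct (C j) as [_ [C2 _]].
  assert (Habs : Rabs (E (k+j)%nat) = Rabs (d (k+j)%nat) * Rabs (d k)).
  { unfold E, c. rewrite !Rabs_mult, !pow_1_abs. ring. }
  assert (E (k+j)%nat <= Rabs (E (k+j)%nat)) by apply Rle_abs.
  rewrite HEk in C2.
  assert (Hsq : d k * d k = Rabs (d k) * Rabs (d k)).
  { rewrite <- Rabs_mult. rewrite Rabs_right; nra. }
  assert (0 < Rabs (d k)) by (apply Rabs_pos_lt; auto).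
  apply (Rmult_le_reg_l (Rabs (d k))); auto.
  rewrite Hsq in C2. lra.
Qed.

Lemma bound_b (ell s0 sg kp x : R) : 0 < ell -> 0 < x -> sg <= s0 -> s0 < 2*sg ->
  s0 * x * x + kp * x <= ell ->
  - 2 * (s0 - sg) * sqrt ell <= kp * sqrt (2*sg - s0) ->
  (2*sg - s0) * (x*x) <= ell.
Proof.
  intros Hl Hx H1 H2 Hq Hc.
  set (u := sqrt ell) in *. set (v := sqrt (2*sg - s0)) in *.
  assert (Hu : u*u = ell) by (apply sqrt_sqrt; lra).
  assert (Hv : v*v = 2*sg - s0) by (apply sqrt_sqrt; lra).
  assert (Hu0 : 0 < u) by (apply sqrt_lt_R0; lra).
  assert (Hv0 : 0 < v) by (apply sqrt_lt_R0; lra).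
  destruct (Rle_dec ((2*sg - s0) * (x*x)) ell) as [ok|nok]; [exact ok|exfalso].
  set (w := x * v).
  assert (Hw : u < w).
  { destruct (Rlt_dec u w) as [h|h]; [exact h|].
    exfalso. apply nok. rewrite <- Hv, <- Hu. unfold w in h. apply Rnot_lt_le in h.
    assert (0 <= x*v) by nra. replace (v*v*(x*x)) with ((x*v)*(x*v)) by ring. apply Rmult_le_compat; lra. }
  assert (Hkv : kp * v >= - (s0 - v*v) * u) by (rewrite Hv; lra).
  assert (A1 : v * (u*u) >= s0 * x * x * v + (kp * v) * x).
  { rewrite Hu. assert (v * (s0 * x * x + kp * x) <= v * ell) by (apply Rmult_le_compat_l; lra). lra. }
  assert (A2 : (kp * v) * x >= - (s0 - v*v) * u * x) by nra.
  assert (A3 : v * (u*u) >= s0 * x * x * v - (s0 - v*v) * u * x) by lra.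
  assert (A4 : v * v * (u*u) >= s0 * w * w - (s0 - v*v) * u * w).
  { unfold w. assert (v * (v * (u*u)) >= v * (s0 * x * x * v - (s0 - v*v) * u * x)) by nra. nra. }
  assert (A5 : 0 < (w - u) * (s0 * w + v*v*u)).
  { apply Rmult_lt_0_compat; [lra|]. assert (0 < v*v*u) by (apply Rmult_lt_0_compat; nra). nra. }
  nra.
Qed.

Lemma bound_up (ell s0 kp x : R) : 0 < s0 -> 0 < x -> s0 * x * x + kp * x <= ell ->
  x * x <= 2 * (ell / s0 + negpart kp ^ 2 / s0 ^ 2).
Proof.
  intros Hs Hx Hq. unfold negpart.
  set (m := (Rabs kp - kp)/2).
  assert (Hm : 0 <= m /\ - m <= kp).
  { unfold m. destruct (Rle_dec 0 kp). rewrite Rabs_right; lra. rewrite Rabs_left; lra. }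
  set (z := s0 * x).
  assert (B1 : z*z - m*z <= ell * s0).
  { unfold z. assert (s0 * (s0 * x * x + kp * x) <= s0 * ell) by (apply Rmult_le_compat_l; lra).
    destruct Hm. assert (s0 * x * x * s0 + kp * x * s0 >= s0*x*s0*x - m*(s0*x)).
    { assert (0 <= (kp + m) * (x * s0)) by (apply Rmult_le_pos; nra). nra. } nra. }
  assert (B2 : z*z <= 2*ell*s0 + m*m) by (pose proof (pow2_ge_0 (z - m)); nra).
  assert (x*x = z*z / (s0^2)) by (unfold z; field; lra).
  rewrite H. apply (Rmult_le_reg_l (s0^2)). nra.
  replace (s0^2 * (z*z/s0^2)) with (z*z) by (field; lra).
  replace (s0 ^ 2 * (2 * (ell / s0 + m ^ 2 / s0 ^ 2))) with (2*ell*s0 + 2*(m*m)) by (field; lra).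
  nra.
Qed.
Section Main.
Variables (ell s0 kappa s1 sm1 : nat -> R)
  (Hell : forall n, (1 <= n)%nat -> 0 < ell n)
  (Hs0 : forall n, (1 <= n)%nat -> 0 < s0 n)
  (Hs1 : forall n, (1 <= n)%nat -> 0 <= s1 n)
  (Hsm1 : forall n, (1 <= n)%nat -> 0 <= sm1 n)
  (Hliminf : liminf_eq
     (fun n => / (INR n ^ 2) *
        (ell n / s0 n + (negpart (kappa n)) ^ 2 / (s0 n ^ 2))) 0)
  (Na : nat -> Prop)
  (Ha : forall n, (1 <= n)%nat -> Na n ->
          2 * Rmax (sm1 n) (s1 n) <= s0 n)
  (Hb : forall n, (1 <= n)%nat -> ~ Na n ->
          Rmax (sm1 n) (s1 n) <= s0 n /\ s0 n < 2 * Rmax (sm1 n) (s1 n) /\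
          - 2 * (s0 n - Rmax (sm1 n) (s1 n)) * sqrt (ell n)
            <= kappa n * sqrt (2 * Rmax (sm1 n) (s1 n) - s0 n))
  (x0 : R)
  (Hx0 : ~ Na 1%nat ->
          - 2 * (s0 1%nat - Rmax (sm1 1%nat) (s1 1%nat)) * sqrt (ell 1%nat)
            <= (sm1 1%nat * x0 + kappa 1%nat)
               * sqrt (2 * Rmax (sm1 1%nat) (s1 1%nat) - s0 1%nat)).

Lemma sol_ineq2 x : is_solution ell s1 s0 sm1 kappa x0 x -> is_positive x ->
  forall n, (2 <= n)%nat -> s0 n * x n * x n + kappa n * x n <= ell n.
Proof.
  intros [_ Hx] Hp n Hn. rewrite (Hx n ltac:(lia)).
  pose proof (Hp n ltac:(lia)). pose proof (Hp (S n) ltac:(lia)). pose proof (Hp (n-1)%nat ltac:(lia)).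
  pose proof (Hs1 n ltac:(lia)). pose proof (Hsm1 n ltac:(lia)).
  assert (0 <= x n * (s1 n * x (S n) + sm1 n * x (n-1)%nat)).
  { apply Rmult_le_pos; [lra|]. assert (0 <= s1 n * x (S n)) by (apply Rmult_le_pos; lra).
    assert (0 <= sm1 n * x (n-1)%nat) by (apply Rmult_le_pos; lra). lra. }
  nra.
Qed.

Lemma sol_ineq1 x : is_solution ell s1 s0 sm1 kappa x0 x -> is_positive x ->
  s0 1%nat * x 1%nat * x 1%nat + (sm1 1%nat * x0 + kappa 1%nat) * x 1%nat <= ell 1%nat.
Proof.
  intros [H0 Hx] Hp. rewrite (Hx 1%nat ltac:(lia)). simpl (1 - 1)%nat. rewrite H0.
  pose proof (Hp 1%nat ltac:(lia)). pose proof (Hp 2%nat ltac:(lia)).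
  pose proof (Hs1 1%nat ltac:(lia)).
  assert (0 <= x 1%nat * (s1 1%nat * x 2%nat)).
  { apply Rmult_le_pos; [lra|]. apply Rmult_le_pos; lra. }
  nra.
Qed.

Lemma sol_b x : is_solution ell s1 s0 sm1 kappa x0 x -> is_positive x ->
  forall n, (1 <= n)%nat -> ~ Na n ->
  (2 * Rmax (sm1 n) (s1 n) - s0 n) * (x n * x n) <= ell n.
Proof.
  intros Hx Hp n Hn HN. destruct (Hb n Hn HN) as [B1 [B2 B3]].
  destruct (Nat.eq_dec n 1) as [->|Hne].
  - apply (bound_b _ _ _ (sm1 1%nat * x0 + kappa 1%nat)); auto.
    apply sol_ineq1; auto.
  - apply (bound_b _ _ _ (kappa n)); auto.
    apply sol_ineq2; auto; lia.
Qed.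

Lemma sol_up x : is_solution ell s1 s0 sm1 kappa x0 x -> is_positive x ->
  forall n, (2 <= n)%nat ->
  x n * x n <= 2 * (ell n / s0 n + negpart (kappa n) ^ 2 / s0 n ^ 2).
Proof.
  intros Hx Hp n Hn. apply bound_up; auto. apply Hs0; lia. apply Hp; lia.
  apply sol_ineq2; auto.
Qed.

Lemma diff_eq x y : is_solution ell s1 s0 sm1 kappa x0 x -> is_positive x ->
  is_solution ell s1 s0 sm1 kappa x0 y -> is_positive y ->
  forall n, (1 <= n)%nat ->
  s1 n * (y (S n) - x (S n)) + (s0 n + ell n / (x n * y n)) * (y n - x n)
    + sm1 n * (y (n-1)%nat - x (n-1)%nat) = 0.
Proof.
  intros [_ Hx] Hpx [_ Hy] Hpy n Hn.
  pose proof (Hpx n Hn). pose proof (Hpy n Hn).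
  assert (E1 : x n * y n * (ell n / (x n * y n)) = ell n) by (field; lra).
  apply (Rmult_eq_reg_l (x n * y n)); [| nra].
  rewrite Rmult_0_r.
  set (P := s1 n * (y (S n) - x (S n)) + s0 n * (y n - x n) + sm1 n * (y (n-1)%nat - x (n-1)%nat)).
  transitivity (x n * y n * P + (x n * y n * (ell n / (x n * y n))) * (y n - x n)).
  { unfold P; ring. }
  rewrite E1.
  assert (T1 : ell n * y n = (x n * (s1 n * x (S n) + s0 n * x n + sm1 n * x (n - 1)%nat) + kappa n * x n) * y n)
    by (rewrite <- (Hx n Hn); reflexivity).
  assert (T2 : ell n * x n = (y n * (s1 n * y (S n) + s0 n * y n + sm1 n * y (n - 1)%nat) + kappa n * y n) * x n)
    by (rewrite <- (Hy n Hn); reflexivity).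
  unfold P.
  replace (ell n * (y n - x n)) with (ell n * y n - ell n * x n) by ring.
  rewrite T1, T2. ring.
Qed.

Lemma A_ge x y : is_solution ell s1 s0 sm1 kappa x0 x -> is_positive x ->
  is_solution ell s1 s0 sm1 kappa x0 y -> is_positive y ->
  forall n, (1 <= n)%nat ->
  0 <= s1 n /\ 0 <= sm1 n /\ 0 < s0 n + ell n / (x n * y n) /\
  2 * Rmax (sm1 n) (s1 n) <= s0 n + ell n / (x n * y n).
Proof.
  intros Hx Hpx Hy Hpy n Hn.
  pose proof (Hpx n Hn). pose proof (Hpy n Hn). pose proof (Hell n Hn). pose proof (Hs0 n Hn).
  assert (Hq : 0 < ell n / (x n * y n)) by (apply Rdiv_lt_0_compat; nra).
  split; [auto|]. split; [auto|]. split; [lra|].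
  destruct (classic (Na n)) as [HN|HN].
  - pose proof (Ha n Hn HN). lra.
  - pose proof (sol_b x Hx Hpx n Hn HN). pose proof (sol_b y Hy Hpy n Hn HN).
    destruct (Hb n Hn HN) as [B1 [B2 B3]].
    set (D := 2 * Rmax (sm1 n) (s1 n) - s0 n) in *.
    assert (D * (x n * y n) <= ell n).
    { assert ((D * (x n * y n)) * (D * (x n * y n)) <= ell n * ell n).
      { replace ((D * (x n * y n)) * (D * (x n * y n))) with ((D * (x n * x n)) * (D * (y n * y n))) by ring.
        assert (0 < D) by (unfold D; lra).
        apply Rmult_le_compat; try lra; apply Rmult_le_pos; nra. }
      destruct (Rle_dec (D * (x n * y n)) (ell n)) as [ok|nok]; [exact ok|exfalso].
      apply Rnot_le_lt in nok.
      assert (ell n * ell n < (D * (x n * y n)) * (D * (x n * y n))) by (apply Rmult_le_0_lt_compat; lra).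
      lra. }
    assert (D <= ell n / (x n * y n)).
    { apply (Rmult_le_reg_l (x n * y n)); [nra|].
      replace (x n * y n * (ell n / (x n * y n))) with (ell n) by (field; lra). lra. }
    unfold D in *. lra.
Qed.

Lemma step x y : is_solution ell s1 s0 sm1 kappa x0 x -> is_positive x ->
  is_solution ell s1 s0 sm1 kappa x0 y -> is_positive y ->
  forall n, (1 <= n)%nat -> y (n-1)%nat - x (n-1)%nat = 0 -> y n - x n = 0.
Proof.
  intros Hx Hpx Hy Hpy n Hn Hd0.
  destruct (Req_dec (y n - x n) 0) as [ok|Hdn]; [exact ok|exfalso].
  set (d := fun i => y i - x i).
  pose proof (growth d (fun i => s0 i + ell i / (x i * y i)) s1 sm1 n Hn Hd0 Hdn
     (fun m Hm => diff_eq x y Hx Hpx Hy Hpy m ltac:(lia))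
     (fun m Hm => A_ge x y Hx Hpx Hy Hpy m ltac:(lia))) as G.
  set (delta := Rabs (y n - x n)).
  assert (Hdel : 0 < delta) by (apply Rabs_pos_lt; auto).
  set (a := INR n).
  assert (Ha0 : 0 < a) by (apply lt_0_INR; lia).
  destruct Hliminf as [_ Hfr].
  destruct (Hfr (delta^2 / (8 * a^2)) ltac:(apply Rdiv_lt_0_compat; nra) (n+2)%nat) as [m [Hm Hu]].
  set (j := (m - n)%nat).
  specialize (G j). replace (n + j)%nat with m in G by (unfold j; lia).
  unfold d in G; cbv beta in G; fold delta in G.
  set (Q := ell m / s0 m + negpart (kappa m) ^ 2 / s0 m ^ 2) in *.
  pose proof (sol_up x Hx Hpx m ltac:(lia)) as Ux. pose proof (sol_up y Hy Hpy m ltac:(lia)) as Uy.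
  fold Q in Ux, Uy.
  pose proof (Hpx m ltac:(lia)). pose proof (Hpy m ltac:(lia)).
  assert (Dm : (y m - x m) * (y m - x m) <= 4 * Q) by nra.
  set (b := INR (S j)) in *.
  assert (Hb0 : 0 < b) by (apply lt_0_INR; lia).
  assert (Hdb : (delta * b) * (delta * b) <= 4 * Q).
  { assert (Rabs (y m - x m) * Rabs (y m - x m) = (y m - x m) * (y m - x m)).
    { rewrite <- Rabs_mult. apply Rabs_right. apply Rle_ge. apply Rle_0_sqr. }
    assert (0 <= delta * b) by nra.
    assert ((delta * b) * (delta * b) <= Rabs (y m - x m) * Rabs (y m - x m)) by (apply Rmult_le_compat; lra).
    lra. }
  set (mm := INR m) in *.
  assert (Hmm : mm <= a * b).
  { unfold mm, a, b. rewrite <- mult_INR. apply le_INR. unfold j. nia. }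
  assert (Hmm0 : 0 < mm) by (apply lt_0_INR; lia).
  rewrite Rplus_0_l in Hu.
  assert (HQ : Q < delta ^ 2 / (8 * a ^ 2) * mm^2).
  { replace Q with (mm^2 * (/ mm^2 * Q)) by (field; lra).
    rewrite (Rmult_comm _ (mm^2)). apply Rmult_lt_compat_l; [nra|]. exact Hu. }
  assert (delta ^ 2 / (8 * a ^ 2) * mm^2 <= delta ^ 2 / (8 * a ^ 2) * (a*b)^2).
  { apply Rmult_le_compat_l. apply Rlt_le, Rdiv_lt_0_compat; nra. nra. }
  replace (delta ^ 2 / (8 * a ^ 2) * (a*b)^2) with ((delta*b)*(delta*b)/8) in H1 by (field; lra).
  nra.
Qed.

Lemma all_eq x y : is_solution ell s1 s0 sm1 kappa x0 x -> is_positive x ->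
  is_solution ell s1 s0 sm1 kappa x0 y -> is_positive y ->
  forall n, x n = y n.
Proof.
  intros Hx Hpx Hy Hpy n. induction n as [|n IH].
  - destruct Hx as [-> _]. destruct Hy as [-> _]. reflexivity.
  - assert (y (S n - 1)%nat - x (S n - 1)%nat = 0) by (replace (S n - 1)%nat with n by lia; lra).
    pose proof (step x y Hx Hpx Hy Hpy (S n) ltac:(lia) H). lra.
Qed.

End Main.

Theorem theorem5p2
  (ell s0 kappa s1 sm1 : nat -> R)
  (Hell : forall n, (1 <= n)%nat -> 0 < ell n)
  (Hs0 : forall n, (1 <= n)%nat -> 0 < s0 n)
  (Hs1 : forall n, (1 <= n)%nat -> 0 <= s1 n)
  (Hsm1 : forall n, (1 <= n)%nat -> 0 <= sm1 n)
  (Hliminf : liminf_eq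
     (fun n => / (INR n ^ 2) *
        (ell n / s0 n + (negpart (kappa n)) ^ 2 / (s0 n ^ 2))) 0)
  (Na : nat -> Prop)
  (Ha : forall n, (1 <= n)%nat -> Na n ->
          2 * Rmax (sm1 n) (s1 n) <= s0 n)
  (Hb : forall n, (1 <= n)%nat -> ~ Na n ->
          Rmax (sm1 n) (s1 n) <= s0 n /\ s0 n < 2 * Rmax (sm1 n) (s1 n) /\
          - 2 * (s0 n - Rmax (sm1 n) (s1 n)) * sqrt (ell n)
            <= kappa n * sqrt (2 * Rmax (sm1 n) (s1 n) - s0 n))
  (x0 : R)
  (Hx0 : ~ Na 1%nat ->
          - 2 * (s0 1%nat - Rmax (sm1 1%nat) (s1 1%nat)) * sqrt (ell 1%nat)
            <= (sm1 1%nat * x0 + kappa 1%nat)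
               * sqrt (2 * Rmax (sm1 1%nat) (s1 1%nat) - s0 1%nat)) :
  exists xstar, 0 < xstar /\
    (forall x, is_solution ell s1 s0 sm1 kappa x0 x -> is_positive x ->
       x 1%nat = xstar) /\
    (forall x y, is_solution ell s1 s0 sm1 kappa x0 x -> is_positive x ->
       is_solution ell s1 s0 sm1 kappa x0 y -> is_positive y ->
       forall n, (1 <= n)%nat -> x n = y n).
Proof.
  pose proof (all_eq ell s0 kappa s1 sm1 Hell Hs0 Hs1 Hsm1 Hliminf Na Ha Hb x0 Hx0) as AE.
  destruct (classic (exists z, is_solution ell s1 s0 sm1 kappa x0 z /\ is_positive z)) as [[z [Hz Hpz]]|Hno].
  - exists (z 1%nat). split; [apply Hpz; lia|]. split.
    + intros x Hx Hpx. apply (AE x z); auto.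
    + intros x y Hx Hpx Hy Hpy n _. apply (AE x y); auto.
  - exists 1. split; [lra|]. split.
    + intros x Hx Hpx. exfalso. apply Hno. eauto.
    + intros x y Hx Hpx. exfalso. apply Hno. eauto.
Qed.
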